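(* Let $X$ be a semiprime Banach algebra with unit element $\mathbf{1}$. Let $\phi,\psi:X^2\to[0,\infty)$ and $f:X\to X$ with $f(0)=0$ satisfy $$\|f(xyx)-f(x)yx-xf(y)x-xyf(x)\|\le\psi(x,y),$$ $$\|f(2x+y)+f(x+2y)-f(3x)-f(3y)\|\le\phi(x,y)$$ for all $x,y\in X$. Assume there exists $0<L<1$ such that for all $x,y\in X$ $$\tfrac12\phi(2x,2y)\le L\phi(x,y),\qquad \lim_{k\to\infty}8^{-k}\psi(2^kx,2^ky)=0,\qquad \lim_{k\to\infty}4^{-k}\psi(2^kx,y)=0.$$ Then $f$ is a derivation.
   Context: An algebra $X$ is semiprime if $aXa=\{0\}$ for some $a\in X$ implies $a=0$. A derivation is an additive map $D:X\to X$ with $D(xy)=D(x)y+xD(y)$ for all $x,y\in X$. *)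

(* Defs.v *)
From HB Require Import structures.
From mathcomp Require Import all_boot all_order all_algebra.
From mathcomp Require Import all_classical all_reals all_analysis.
Set Implicit Arguments. Unset Strict Implicit. Unset Printing Implicit Defensive.
Import Order.TTheory GRing.Theory Num.Theory.
Import numFieldNormedType.Exports.
Local Open Scope ring_scope.

(* A (real) Banach algebra with unit element: a Banach space
   X : completeNormedModType R equipped with a multiplication [mul] and a
   unit element [one] making X an associative unital R-algebra whose norm
   is submultiplicative.  (MathComp's ring hierarchy cannot be joined with
   the normed-module hierarchy by HB, so the algebra structure is given
   explicitly.) *)
Record banach_algebra (R : realType) (X : completeNormedModType R)
    (mul : X -> X -> X) (one : X) : Prop := BanachAlgebra {
  ba_mulA  : forall x y z, mul x (mul y z) = mul (mul x y) z;
  ba_mul1l : forall x, mul one x = x;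
  ba_mul1r : forall x, mul x one = x;
  ba_mulDl : forall x y z, mul (x + y) z = mul x z + mul y z;
  ba_mulDr : forall x y z, mul x (y + z) = mul x y + mul x z;
  ba_scalerAl : forall (a : R) x y, mul (a *: x) y = a *: mul x y;
  ba_scalerAr : forall (a : R) x y, mul x (a *: y) = a *: mul x y;
  ba_normM : forall x y, `|mul x y| <= `|x| * `|y|
}.

Definition semiprime (R : realType) (X : completeNormedModType R)
    (mul : X -> X -> X) : Prop :=
  forall a : X, (forall x : X, mul (mul a x) a = 0) -> a = 0.

Definition derivation (R : realType) (X : completeNormedModType R)
    (mul : X -> X -> X) (D : X -> X) : Prop :=
  (forall x y, D (x + y) = D x + D y) /\
  (forall x y, D (mul x y) = mul (D x) y + mul x (D y)).

(* Main.v *)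
Require Import Defs.
From HB Require Import structures.
From mathcomp Require Import all_boot all_order all_algebra.
From mathcomp Require Import all_classical all_reals all_analysis.
From mathcomp Require Import ring lra.
Import Order.TTheory GRing.Theory Num.Theory.
Import numFieldNormedType.Exports.
Local Open Scope ring_scope.
Local Open Scope classical_set_scope.

Section Dual.
Variables (R : comNzRingType) (V : lmodType R).
Definition dn := (R * V)%type.
HB.instance Definition _ := GRing.Zmodule.on dn.
Definition dn1 : dn := (1, 0).
Definition dnmul (a b : dn) : dn := (a.1 * b.1, a.1 *: b.2 + b.1 *: a.2).
Lemma dnmulA : associative dnmul.
Proof. move=> [a u] [b v] [c w]; rewrite /dnmul /=; congr pair; first by rewrite mulrA.
rewrite !scalerDr !scalerA. by rewrite (mulrC c a) (mulrC c b) addrA. Qed.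
Lemma dnmulC : commutative dnmul.
Proof. by move=> [a u] [b v]; rewrite /dnmul /= mulrC addrC. Qed.
Lemma dnmul1 : left_id dn1 dnmul.
Proof. by move=> [a u]; rewrite /dnmul /= mul1r scale1r scaler0 addr0. Qed.
Lemma dnmulDl : left_distributive dnmul +%R.
Proof. move=> [a u] [b v] [c w]; rewrite /dnmul /=; congr pair; first by rewrite mulrDl.
by rewrite scalerDl scalerDr addrACA. Qed.
Lemma dn1_neq0 : dn1 != 0.
Proof. by apply/eqP => -[] /eqP; rewrite oner_eq0. Qed.
HB.instance Definition _ := GRing.Zmodule_isComNzRing.Build dn dnmulA dnmulC dnmul1 dnmulDl dn1_neq0.
Definition emb (v : V) : dn := (0, v).
Definition embs (r : R) : dn := (r, 0).
Lemma emb_inj : injective emb. Proof. by move=> u v [->]. Qed.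
Lemma embD u v : emb (u + v) = emb u + emb v. Proof. by rewrite /emb; congr pair; rewrite addr0. Qed.
Lemma embN u : emb (- u) = - emb u. Proof. by rewrite /emb; congr pair; rewrite oppr0. Qed.
Lemma emb0 : emb 0 = 0. Proof. by []. Qed.
Lemma embZ r u : emb (r *: u) = embs r * emb u.
Proof. by rewrite /emb /embs; apply/eqP; rewrite /GRing.mul /= /dnmul /= mulr0 scale0r addr0. Qed.
Lemma embsD r s : embs (r + s) = embs r + embs s. Proof. by rewrite /embs; congr pair; rewrite addr0. Qed.
Lemma embsM r s : embs (r * s) = embs r * embs s.
Proof. by rewrite /embs; apply/eqP; rewrite /GRing.mul /= /dnmul /= !scaler0 addr0. Qed.
Lemma embs1 : embs 1 = 1. Proof. by []. Qed.
End Dual.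

Lemma embs_nat (R : comNzRingType) (V : lmodType R) n : @embs R V (n%:R) = n%:R.
Proof. elim: n => [|n IH] //; by rewrite mulrS embsD IH -mulrS. Qed.

Ltac acring := apply: emb_inj; rewrite ?(embD, embN, emb0, embZ, embsM, embs_nat); ring.

Lemma two0 (R : realType) (V : lmodType R) (v : V) : v + v = 0 -> v = 0.
Proof.
move=> h; have : (2 : R) *: v = 0 by rewrite scaler_nat mulr2n.
by move/eqP; rewrite scaler_eq0 pnatr_eq0 /= => /eqP.
Qed.

Section Alg.
Variables (R : realType) (X : completeNormedModType R) (mul : X -> X -> X) (one : X).
Hypothesis BA : banach_algebra mul one.
Hypothesis SP : semiprime mul.
Variable d : X -> X.
Hypothesis dD : forall x y, d (x + y) = d x + d y.
Hypothesis dT : forall x y, d (mul (mul x y) x) =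
  mul (mul (d x) y) x + mul (mul x (d y)) x + mul (mul x y) (d x).

Let mulA := ba_mulA BA.
Let mulDl := ba_mulDl BA.
Let mulDr := ba_mulDr BA.
Let mul1l := ba_mul1l BA.
Let mul1r := ba_mul1r BA.
Let mulZl := ba_scalerAl BA.
Let mulZr := ba_scalerAr BA.

Lemma amul0l x : mul 0 x = 0.
Proof. apply: (addrI (mul 0 x)); by rewrite -mulDl !addr0. Qed.
Lemma amul0r x : mul x 0 = 0.
Proof. apply: (addrI (mul x 0)); by rewrite -mulDr !addr0. Qed.
Lemma amulNl x y : mul (- x) y = - mul x y.
Proof. apply: (addrI (mul x y)); by rewrite -mulDl !subrr amul0l. Qed.
Lemma amulNr x y : mul x (- y) = - mul x y.
Proof. apply: (addrI (mul x y)); by rewrite -mulDr !subrr amul0r. Qed.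
Lemma d0 : d 0 = 0.
Proof. apply: (addrI (d 0)); by rewrite -dD !addr0. Qed.
Lemma dN x : d (- x) = - d x.
Proof. apply: (addrI (d x)); by rewrite -dD !subrr d0. Qed.

Ltac nrm := rewrite ?(mulDl, mulDr, amulNl, amulNr, mulA, amul0l, amul0r, mulZl, mulZr,
   dD, dN, d0, mul1l, mul1r).

Ltac nrmh h := rewrite ?(mulDl, mulDr, amulNl, amulNr, mulA, amul0l, amul0r, mulZl, mulZr,
   dD, dN, d0, mul1l, mul1r) in h.

Ltac use_eq H := match type of H with ?hl = ?hr =>
  apply/eqP; rewrite -subr_eq0; apply/eqP;
  first [ transitivity (hl - hr); [nrm; acring | by rewrite H subrr]
        | transitivity (hr - hl); [nrm; acring | by rewrite H subrr] ] end.

Lemma d1 : d one = 0.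
Proof. have h := dT one one; nrmh h; apply: two0.
apply: (addrI (d one)); rewrite addr0 [in RHS]h. acring. Qed.

Lemma dJ x : d (mul x x) = mul (d x) x + mul x (d x).
Proof. have h := dT x one; rewrite d1 in h; nrmh h; by rewrite h addr0. Qed.

Lemma dba a b : d (mul b a) = mul (d a) b + mul a (d b) + mul (d b) a + mul b (d a) - d (mul a b).
Proof. have h := dJ (a + b); nrmh h; rewrite !dJ in h. use_eq h. Qed.

Lemma dTL x y z : d (mul (mul x y) z + mul (mul z y) x) =
  mul (mul (d x) y) z + mul (mul x (d y)) z + mul (mul x y) (d z) +
  mul (mul (d z) y) x + mul (mul z (d y)) x + mul (mul z y) (d x).
Proof. have h := dT (x + z) y; nrmh h; rewrite (dT x y) (dT z y) in h; nrmh h. use_eq h. Qed.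

Definition del a b := locked (d (mul a b) - mul (d a) b - mul a (d b)).
Definition com a b := locked (mul a b - mul b a).

Lemma SA a b x : mul (mul (del a b) x) (com a b) + mul (mul (com a b) x) (del a b) = 0.
Proof.
have E4 := dT b x. have E5 := dT a x.
have E2 := dT a (mul (mul b x) b). have E3 := dT b (mul (mul a x) a).
rewrite E4 in E2. rewrite E5 in E3. nrmh E2. nrmh E3.
have E1 := dTL (mul a b) x (mul b a). nrmh E1.
rewrite E2 E3 (dba a b) in E1. nrmh E1.
rewrite /del /com -!lock. use_eq E1.
Qed.

Definition anti a b z := mul (mul a z) b + mul (mul b z) a.

Lemma L1 a b : (forall z, mul (mul a z) b + mul (mul b z) a = 0) -> forall x, mul (mul a x) b = 0.
Proof.
move=> H x; have H' : forall z, anti a b z = 0 := H.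
apply: SP => y; apply: two0.
transitivity (mul (mul (mul (mul a x) (anti a b y)) x) b - mul (mul (anti a b (mul (mul x a) y)) x) b
  + mul (mul (mul (mul b x) a) y) (anti a b x) - mul (mul (anti a b x) y) (mul (mul b x) a)
  + mul (mul (mul (mul a x) b) y) (anti a b x)).
  rewrite /anti; nrm; acring.
by rewrite !H' !(amul0l, amul0r) !(subr0, addr0).
Qed.

Lemma delDl a c b : del (a + c) b = del a b + del c b.
Proof. rewrite /del -!lock; nrm; acring. Qed.
Lemma delDr a b c : del a (b + c) = del a b + del a c.
Proof. rewrite /del -!lock; nrm; acring. Qed.
Lemma comDl a c b : com (a + c) b = com a b + com c b.
Proof. rewrite /com -!lock; nrm; acring. Qed.
Lemma comDr a b c : com a (b + c) = com a b + com a c.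
Proof. rewrite /com -!lock; nrm; acring. Qed.

Lemma SB1 a b x : mul (mul (del a b) x) (com a b) = 0.
Proof. apply: L1 => z; exact: SA. Qed.
Lemma SB2 a b x : mul (mul (com a b) x) (del a b) = 0.
Proof. apply: L1 => z; by rewrite addrC SA. Qed.

Lemma SC1 a b c x : mul (mul (del a b) x) (com c b) = 0.
Proof.
have h := SB1 (a + c) b x.
rewrite delDl comDl !mulDl !mulDr (SB1 a b x) (SB1 c b x) add0r addr0 in h.
move/eqP: h; rewrite addr_eq0 => /eqP hs.
apply: SP => y; rewrite {1}hs amulNl amulNl.
rewrite (_ : mul (mul (mul (mul (del c b) x) (com a b)) y) (mul (mul (del a b) x) (com c b))
   = mul (mul (mul (del c b) x) (mul (mul (com a b) y) (del a b))) (mul x (com c b))); last by nrm.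
by rewrite (SB2 a b y) amul0r amul0l oppr0.
Qed.

Lemma SC2 a b c x : mul (mul (com c b) x) (del a b) = 0.
Proof.
have h := SB2 (a + c) b x.
rewrite delDl comDl !mulDl !mulDr (SB2 a b x) (SB2 c b x) add0r addr0 addrC in h.
move/eqP: h; rewrite addr_eq0 => /eqP hs.
apply: SP => y; rewrite {2}hs amulNr.
rewrite (_ : mul (mul (mul (mul (com c b) x) (del a b)) y) (mul (mul (com a b) x) (del c b))
   = mul (mul (mul (com c b) x) (mul (mul (del a b) y) (com a b))) (mul x (del c b))); last by nrm.
by rewrite (SB1 a b y) amul0r amul0l oppr0.
Qed.

Lemma SD a b c e x : mul (mul (del a b) x) (com c e) = 0.
Proof.
have h := SC1 a (b + e) c x.
rewrite delDr comDr !mulDl !mulDr (SC1 a b c x) (SC1 a e c x) add0r addr0 in h.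
move/eqP: h; rewrite addr_eq0 => /eqP hs.
apply: SP => y; rewrite {1}hs amulNl amulNl.
rewrite (_ : mul (mul (mul (mul (del a e) x) (com c b)) y) (mul (mul (del a b) x) (com c e))
   = mul (mul (mul (del a e) x) (mul (mul (com c b) y) (del a b))) (mul x (com c e))); last by nrm.
by rewrite (SC2 a b c y) amul0r amul0l oppr0.
Qed.

Lemma SD' a b c e x : mul (del a b) (mul x (com c e)) = 0.
Proof. by rewrite mulA SD. Qed.

Lemma cen a b c : mul (del a b) c = mul c (del a b).
Proof.
apply/eqP; rewrite -subr_eq0; apply/eqP.
rewrite (_ : _ - _ = com (del a b) c); last by rewrite /com -lock.
apply: SP => y.
rewrite {1}/com -lock !mulDl !amulNl -!mulA !SD' amul0r oppr0 addr0.
by rewrite (mulA c y) SD'.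
Qed.

Section Fin.
Variables a b : X.
Local Notation dl := (del a b).
Local Notation c0 := (com a b).

Lemma F2 : mul dl c0 = 0.
Proof. by have := SD a b a b one; rewrite mul1r. Qed.
Lemma F5 p q : mul dl (com p q) = 0.
Proof. by have := SD a b p q one; rewrite mul1r. Qed.
Lemma F4 : d c0 = com (d a) b + com a (d b) + (dl + dl).
Proof. rewrite /com /del -!lock; nrm; rewrite (dba a b); nrm; acring. Qed.

Lemma dl0 : dl = 0.
Proof.
have h := dba c0 dl.
rewrite F2 -(cen a b c0) F2 d0 subr0 -(cen a b (d c0)) in h.
have h2 := congr1 (mul dl) h. nrmh h2.
rewrite F2 amul0l (SD a b a b (d dl)) in h2. symmetry in h2.
have Y0 : mul (mul dl dl) (d c0) + mul (mul dl dl) (d c0) = 0 by use_eq h2.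
have Y1 : mul (mul dl dl) (d c0) = 0 by apply: two0.
rewrite F4 !mulDr -!mulA !F5 !amul0r !add0r in Y1.
have D3 : mul dl (mul dl dl) = 0 by apply: two0.
have DD : mul dl dl = 0.
  apply: SP => z.
  rewrite (mulA _ dl dl) -(mulA (mul dl dl) z dl) -(cen a b z) (mulA (mul dl dl) dl z).
  by rewrite -(mulA dl dl dl) D3 !amul0l.
apply: SP => z.
by rewrite -mulA -(cen a b z) mulA DD amul0l.
Qed.
End Fin.

Lemma jordan_der a b : d (mul a b) = mul (d a) b + mul a (d b).
Proof.
have h := dl0 a b; rewrite /del -lock in h.
apply/eqP; rewrite -subr_eq0; apply/eqP; rewrite -h; acring.
Qed.
End Alg.

Lemma zero_of_bound (R : realType) (V : normedModType R) (v : V) (u : nat -> R) :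
  (forall k, `|v| <= u k) -> u @ \oo --> 0 -> v = 0.
Proof.
move=> hb hu; apply/eqP/negPn/negP => hv.
have hp : 0 < `|v| by rewrite normr_gt0.
have := cvgr0_norm_lt u hu _ hp. case=> N _ HN.
have := HN N (leqnn N) => /= h.
have := hb N; have := ler_norm (u N). lra.
Qed.

Section Analytic.
Variables (R : realType) (X : completeNormedModType R) (mul : X -> X -> X) (one : X).
Variables (phi psi : X -> X -> R) (f : X -> X) (L : R).
Hypothesis BA : banach_algebra mul one.
Hypothesis psi0 : forall x y, 0 <= psi x y.
Hypothesis phi0 : forall x y, 0 <= phi x y.
Hypothesis f0 : f 0 = 0.
Hypothesis Hpsi : forall x y,
     `|f (mul (mul x y) x) - mul (mul (f x) y) x - mul (mul x (f y)) x
         - mul (mul x y) (f x)| <= psi x y.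
Hypothesis Hphi : forall x y, `|f (2 *: x + y) + f (x + 2 *: y) - f (3 *: x) - f (3 *: y)|
                 <= phi x y.
Hypothesis L0 : 0 < L.
Hypothesis L1 : L < 1.
Hypothesis HL : forall x y, phi (2 *: x) (2 *: y) / 2 <= L * phi x y.
Hypothesis Hlim : forall x y, (fun k : nat => psi (2 ^+ k *: x) y / 4 ^+ k) @ \oo --> 0.

Let bmulA := ba_mulA BA.
Let bmulDl := ba_mulDl BA.
Let bmulDr := ba_mulDr BA.
Let bmul1l := ba_mul1l BA.
Let bmul1r := ba_mul1r BA.
Let bmulZl := ba_scalerAl BA.
Let bmulZr := ba_scalerAr BA.

Lemma phi_iter n x y : phi (2 ^+ n *: x) (2 ^+ n *: y) <= (2 * L) ^+ n * phi x y.
Proof.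
elim: n => [|n IH]; first by rewrite !expr0 !scale1r mul1r.
rewrite !exprS -!scalerA.
have h := HL (2 ^+ n *: x) (2 ^+ n *: y).
have h2 : 0 <= 2 * L by have := L0; lra.
have h3 := ler_wpM2l h2 IH.
rewrite -mulrA. apply: le_trans h3. lra.
Qed.

Lemma four_eq k : (4 : R) ^+ k = 2 ^+ k * 2 ^+ k.
Proof. by rewrite -exprMn; congr (_ ^+ _); rewrite -natrM. Qed.

Lemma mul_e_r w (a : R) : mul w (a *: one) = a *: w.
Proof. by rewrite bmulZr bmul1r. Qed.
Lemma mul_e_l w (a : R) : mul (a *: one) w = a *: w.
Proof. by rewrite bmulZl bmul1l. Qed.

Lemma exactE x y : f (2 *: x + y) + f (x + 2 *: y) - f (3 *: x) - f (3 *: y) = 0.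
Proof.
set F := _ - _.
pose V k z := f (mul (mul (2 ^+ k *: one) z) (2 ^+ k *: one))
   - mul (mul (f (2 ^+ k *: one)) z) (2 ^+ k *: one)
   - mul (mul (2 ^+ k *: one) (f z)) (2 ^+ k *: one)
   - mul (mul (2 ^+ k *: one) z) (f (2 ^+ k *: one)).
pose g k := (L * L) ^+ k * phi x y.
pose p z k := psi (2 ^+ k *: one) z / 4 ^+ k.
pose B k := g k + p (2 *: x + y) k + p (x + 2 *: y) k + p (3 *: x) k + p (3 *: y) k.
apply: (@zero_of_bound _ _ _ B).
  move=> k.
  pose m : R := 2 ^+ k.
  have mpos : 0 < m by rewrite exprn_gt0.
  have mmpos : 0 < m * m by rewrite mulr_gt0.
  pose W := f (2 *: ((m * m) *: x) + (m * m) *: y) + f ((m * m) *: x + 2 *: ((m * m) *: y))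
     - f (3 *: ((m * m) *: x)) - f (3 *: ((m * m) *: y)).
  have hW : `|W| <= phi ((m * m) *: x) ((m * m) *: y) by apply: Hphi.
  have idt : (m * m) *: F = W - V k (2 *: x + y) - V k (x + 2 *: y) + V k (3 *: x) + V k (3 *: y).
    rewrite /W /V /F -/m !mul_e_r !mul_e_l.
    rewrite (_ : 2 *: ((m * m) *: x) + (m * m) *: y = m *: (m *: (2 *: x + y))); last by acring.
    rewrite (_ : (m * m) *: x + 2 *: ((m * m) *: y) = m *: (m *: (x + 2 *: y))); last by acring.
    rewrite (_ : 3 *: ((m * m) *: x) = m *: (m *: (3 *: x))); last by acring.
    rewrite (_ : 3 *: ((m * m) *: y) = m *: (m *: (3 *: y))); last by acring.
    rewrite ?(bmulDl, bmulDr, bmulZl, bmulZr).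
    acring.
  have hV : forall z, `|V k z| <= psi (2 ^+ k *: one) z by move=> z; apply: Hpsi.
  have hphi : phi ((m * m) *: x) ((m * m) *: y) <= (m * m) * g k.
    have := phi_iter (k + k) x y; rewrite !exprD => h; apply: le_trans h _.
    rewrite /g /m !exprMn.
    by rewrite le_eqVlt; apply/orP; left; apply/eqP; ring.
  have nF : (m * m) * `|F| <= `|W| + `|V k (2 *: x + y)| + `|V k (x + 2 *: y)| + `|V k (3 *: x)| + `|V k (3 *: y)|.
    rewrite -[X in X * _]ger0_norm ?(ltW mmpos) // -normrZ idt.
    set a := W; set b := V k _; set c := V k _; set d' := V k _; set e := V k _.
    have := ler_normD (a - b - c + d') e; have := ler_normD (a - b - c) d';
    have := ler_normB (a - b) c; have := ler_normB a b; lra.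
  have h1 := hV (2 *: x + y). have h2 := hV (x + 2 *: y).
  have h3 := hV (3 *: x). have h4 := hV (3 *: y).
  rewrite -(ler_pM2l mmpos) /B /p four_eq -/m !mulrDr !(mulrC (m * m) (psi _ _ / _)) !divfK ?gt_eqF //.
  lra.
have hLL : `|L * L| < 1.
  rewrite ger0_norm; last by rewrite mulr_ge0 // ltW.
  by have := L0; have := L1; nra.
have cg : g @ \oo --> 0.
  have := @cvgMr_tmp _ _ _ _ _ _ (phi x y) (cvg_expr hLL).
  rewrite mul0r => h. by apply: h.
have := cvgD (cvgD (cvgD (cvgD cg (Hlim one (2 *: x + y))) (Hlim one (x + 2 *: y)))
   (Hlim one (3 *: x))) (Hlim one (3 *: y)).
rewrite !addr0 => h. by apply: h.
Qed.

End Analytic.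

Ltac use_eq0 H := match type of H with ?hl = ?hr =>
  apply/eqP; rewrite -subr_eq0; apply/eqP;
  first [ transitivity (hl - hr); [acring | by apply/eqP; rewrite subr_eq0; apply/eqP; exact: H]
        | transitivity (hr - hl); [acring | by apply/eqP; rewrite subr_eq0; apply/eqP; exact: (esym H)] ] end.

Section Additive.
Variables (R : realType) (X : lmodType R) (f : X -> X).
Hypothesis f0 : f 0 = 0.
Hypothesis EE : forall x y, f (2 *: x + y) + f (x + 2 *: y) - f (3 *: x) - f (3 *: y) = 0.

Lemma E' x y : f (2 *: x + y) + f (x + 2 *: y) = f (3 *: x) + f (3 *: y).
Proof. have h := EE x y. use_eq0 h. Qed.

Lemma Ei x : f (3 *: x) = f (2 *: x) + f x.
Proof. have h := E' x 0. rewrite !scaler0 !addr0 f0 addr0 in h. by rewrite h. Qed.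

Lemma G3 a b : f (3 *: a) + f (3 *: b) = f (2 *: (3 *: a) - 3 *: b) + f (2 *: (3 *: b) - 3 *: a).
Proof.
have h := E' (2 *: a - b) (2 *: b - a).
rewrite (_ : 2 *: (2 *: a - b) + (2 *: b - a) = 3 *: a) in h; last by acring.
rewrite (_ : (2 *: a - b) + 2 *: (2 *: b - a) = 3 *: b) in h; last by acring.
rewrite (_ : 3 *: (2 *: a - b) = 2 *: (3 *: a) - 3 *: b) in h; last by acring.
rewrite (_ : 3 *: (2 *: b - a) = 2 *: (3 *: b) - 3 *: a) in h; last by acring.
exact: h.
Qed.

Lemma s3 (v : X) : 3 *: ((3 : R)^-1 *: v) = v.
Proof. by rewrite scalerA divff ?scale1r // pnatr_eq0. Qed.
Lemma s2 (v : X) : 2 *: ((2 : R)^-1 *: v) = v.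
Proof. by rewrite scalerA divff ?scale1r // pnatr_eq0. Qed.

Lemma G a b : f a + f b = f (2 *: a - b) + f (2 *: b - a).
Proof. have h := G3 (3^-1 *: a) (3^-1 *: b). by rewrite !s3 in h. Qed.

Lemma fodd w : f (- w) = - f w.
Proof.
have k : forall u, f (2 *: u) + f (- (2 *: u)) = 0.
  move=> u.
  have h1 := G u 0. rewrite scaler0 subr0 sub0r f0 addr0 in h1.
  have h2 := G (- u) 0. rewrite scaler0 subr0 sub0r opprK f0 addr0 scalerN in h2.
  have h := congr2 +%R h1 h2. use_eq0 h.
have kk := k (2^-1 *: w). rewrite s2 in kk.
apply: (addrI (f w)); by rewrite subrr.
Qed.

Lemma f2 w : f (2 *: w) = 2 *: f w.
Proof. have h1 := G w 0. rewrite scaler0 subr0 sub0r f0 addr0 fodd in h1. use_eq0 h1. Qed.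

Lemma f3 w : f (3 *: w) = 3 *: f w.
Proof. rewrite Ei f2; acring. Qed.

Lemma fadd a b : f (a + b) = f a + f b.
Proof.
have h1 := E' a (b - a).
rewrite (_ : 2 *: a + (b - a) = a + b) in h1; last by acring.
rewrite (_ : a + 2 *: (b - a) = 2 *: b - a) in h1; last by acring.
rewrite (_ : b - a = - (a - b)) in h1; last by acring.
rewrite !f3 fodd in h1.
have h2 := E' b (a - b).
rewrite (_ : 2 *: b + (a - b) = a + b) in h2; last by acring.
rewrite (_ : b + 2 *: (a - b) = 2 *: a - b) in h2; last by acring.
rewrite !f3 in h2.
have h3 := G a b.
have h := congr2 +%R (congr2 +%R h1 h2) h3.
have e : f (a + b) + f (a + b) = (f a + f b) + (f a + f b) by use_eq0 h.
apply/eqP; rewrite -subr_eq0; apply/eqP; apply: two0.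
transitivity (f (a + b) + f (a + b) - ((f a + f b) + (f a + f b))); first by acring.
by rewrite e subrr.
Qed.

Lemma fnat n z : f (n%:R *: z) = n%:R *: f z.
Proof. elim: n => [|n IH]; first by rewrite !scale0r f0. by rewrite mulrS !scalerDl !scale1r fadd IH. Qed.
End Additive.

Lemma triple (R : realType) (X : completeNormedModType R) (mul : X -> X -> X) (one : X)
  (psi : X -> X -> R) (f : X -> X) :
  banach_algebra mul one ->
  (forall n z, f (n%:R *: z) = n%:R *: f z) ->
  (forall x y,
     `|f (mul (mul x y) x) - mul (mul (f x) y) x - mul (mul x (f y)) x
         - mul (mul x y) (f x)| <= psi x y) ->
  (forall x y, (fun k : nat => psi (2 ^+ k *: x) y / 4 ^+ k) @ \oo --> 0) ->
  forall x y, f (mul (mul x y) x) =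
    mul (mul (f x) y) x + mul (mul x (f y)) x + mul (mul x y) (f x).
Proof.
move=> BA fn Hpsi Hlim x y.
have T0 : f (mul (mul x y) x) - mul (mul (f x) y) x - mul (mul x (f y)) x
         - mul (mul x y) (f x) = 0.
  apply: (@zero_of_bound _ _ _ (fun k => psi (2 ^+ k *: x) y / 4 ^+ k)); last exact: Hlim x y.
  move=> k.
  have h := Hpsi (2 ^+ k *: x) y.
  rewrite four_eq ler_pdivlMr ?mulr_gt0 ?exprn_gt0 //.
  rewrite (_ : (2 : R) ^+ k = (2 ^ k)%:R) in h *; last by rewrite natrX.
  set c : R := (2 ^ k)%:R in h *.
  have cp : 0 < c by rewrite /c ltr0n expn_gt0.
  rewrite !(ba_scalerAl BA, ba_scalerAr BA) /c !fn -/c !(ba_scalerAl BA, ba_scalerAr BA) in h.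
  rewrite (_ : _ - _ = (c * c) *: (f (mul (mul x y) x) - mul (mul (f x) y) x - mul (mul x (f y)) x
         - mul (mul x y) (f x))) in h; last by acring.
  rewrite normrZ ger0_norm in h; last by rewrite mulr_ge0 // ltW.
  by rewrite mulrC.
by apply/eqP; rewrite -subr_eq0; apply/eqP; rewrite -T0; acring.
Qed.

Theorem theorem2p7 (R : realType) (X : completeNormedModType R)
  (mul : X -> X -> X) (one : X)
  (phi psi : X -> X -> R) (f : X -> X) :
  banach_algebra mul one ->
  semiprime mul ->
  (forall x y, 0 <= phi x y) -> (forall x y, 0 <= psi x y) ->
  f 0 = 0 ->
  (forall x y,
     `|f (mul (mul x y) x) - mul (mul (f x) y) x - mul (mul x (f y)) x
         - mul (mul x y) (f x)| <= psi x y) ->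
  (forall x y, `|f (2 *: x + y) + f (x + 2 *: y) - f (3 *: x) - f (3 *: y)|
                 <= phi x y) ->
  (exists L : R, 0 < L < 1 /\
     forall x y : X,
       [/\ phi (2 *: x) (2 *: y) / 2 <= L * phi x y,
           (fun k : nat => psi (2 ^+ k *: x) (2 ^+ k *: y) / 8 ^+ k) @ \oo --> 0
         & (fun k : nat => psi (2 ^+ k *: x) y / 4 ^+ k) @ \oo --> 0]) ->
  derivation mul f.
Proof.
move=> BA SP phi0 psi0 f0 Hpsi Hphi [L [/andP [L0 L1] HL]].
have HL1 : forall x y, phi (2 *: x) (2 *: y) / 2 <= L * phi x y by move=> x y; case: (HL x y).
have Hlim : forall x y, (fun k : nat => psi (2 ^+ k *: x) y / 4 ^+ k) @ \oo --> 0.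
  by move=> x y; case: (HL x y).
have EE := @exactE _ _ _ _ _ _ _ _ BA Hpsi Hphi L0 L1 HL1 Hlim.
have fA := @fadd _ _ _ f0 EE.
have fn := @fnat _ _ _ f0 EE.
have dT := @triple _ _ _ _ _ _ BA fn Hpsi Hlim.
split; first exact: fA.
move=> a b. exact: (@jordan_der _ _ _ _ BA SP _ fA dT).
Qed.
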